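(* Let $\Gamma$ and $\Delta$ be sets and $\{f_\delta\}_{\delta\in\Delta}$ a family of real-valued functions on $\Gamma$ such that (i) for every $\delta\in\Delta$ the support $\{\gamma: f_\delta(\gamma)\ne0\}$ is countable, and (ii) for every $\gamma\in\Gamma$ the set $\{\delta\in\Delta: f_\delta(\gamma)\neq0\}$ is nonempty and countable. Then there exist an index set $D$ and partitions $(\Gamma_d)_{d\in D}$ of $\Gamma$ and $(\Delta_d)_{d\in D}$ of $\Delta$ into countable sets such that for $d_1\neq d_2$ we have $\Gamma_{d_1}\cap\Gamma_{d_2}=\emptyset$, $\Delta_{d_1}\cap\Delta_{d_2}=\emptyset$, and $f_\delta(\gamma)=0$ whenever $\gamma\in\Gamma_{d_1},\delta\in\Delta_{d_2}$ or $\gamma\in\Gamma_{d_2},\delta\in\Delta_{d_1}$. *)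

(* Defs.v *)
From mathcomp Require Import all_boot all_order all_algebra.
From mathcomp Require Import boolp classical_sets cardinality reals.
Set Implicit Arguments. Unset Strict Implicit. Unset Printing Implicit Defensive.
Import Order.TTheory GRing.Theory Num.Theory.

(* Main.v *)
From Stdlib Require Import Relations.
Require Import Defs.
From mathcomp Require Import all_boot all_order all_algebra.
From mathcomp Require Import boolp classical_sets cardinality reals.
Import Order.TTheory GRing.Theory Num.Theory.
Local Open Scope classical_set_scope.
Local Open Scope ring_scope.

Section Aux.
Variables (R : realType) (Gamma Delta : Type) (f : Delta -> Gamma -> R).
Let V := (Gamma + Delta)%type.

Definition adjf (u w : V) : Prop :=
  match u, w with
  | inl g, inr d => f d g != 0
  | inr d, inl g => f d g != 0
  | _, _ => False
  end.

Definition connf := clos_refl_trans V adjf.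

Lemma adjf_sym u w : adjf u w -> adjf w u.
Proof. by case: u => [g|d]; case: w => [g'|d']. Qed.

Lemma connf_sym u w : connf u w -> connf w u.
Proof.
elim=> [x y /adjf_sym H|x|x y z _ H1 _ H2].
- exact: rt_step.
- exact: rt_refl.
- exact: rt_trans H2 H1.
Qed.

Fixpoint reach (v : V) (n : nat) : set V :=
  match n with
  | 0%N => [set v]
  | n.+1 => reach v n `|` \bigcup_(u in reach v n) [set w | adjf u w]
  end.

Hypothesis h1 : forall delta : Delta, countable [set gamma | f delta gamma != 0].
Hypothesis h2 : forall gamma : Gamma, countable [set delta | f delta gamma != 0].

Lemma nbr_countable u : countable [set w | adjf u w].
Proof.
case: u => [g|d].
- apply: (@sub_countable _ _ _ (inr @` [set delta | f delta g != 0])); last first.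
    exact: card_le_trans (card_image_le _ _) (h2 g).
  apply: subset_card_le => -[g'|d'] //= H; by exists d'.
- apply: (@sub_countable _ _ _ (inl @` [set gamma | f d gamma != 0])); last first.
    exact: card_le_trans (card_image_le _ _) (h1 d).
  apply: subset_card_le => -[g'|d'] //= H; by exists g'.
Qed.

Lemma reach_countable v n : countable (reach v n).
Proof.
elim: n => [|n IH] /=; first exact: countable1.
rewrite -bigcup2E.
apply: bigcup_countable => // i _ /=.
case: i => [|[|i]] /=; [exact: IH| |exact: countable0].
apply: bigcup_countable => // u _; exact: nbr_countable.
Qed.

Lemma comp_countable v : countable [set w | connf v w].
Proof.
apply: (@sub_countable _ _ _ (\bigcup_(n in setT) reach v n)); last first.
  by apply: bigcup_countable => // n _; exact: reach_countable.
apply: subset_card_le => w /= Hw.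
elim: (clos_rt_rtn1 _ _ _ _ Hw) => [|y z Hyz _ [n _ Hn]]; first by exists 0%N.
exists n.+1 => //=; right; by exists y.
Qed.

End Aux.
Arguments adjf {R Gamma Delta}.
Arguments connf {R Gamma Delta}.
Arguments connf_sym {R Gamma Delta f u w}.
Arguments comp_countable {R Gamma Delta f}.

Theorem lemma3p7 (R : realType) (Gamma Delta : Type)
  (f : Delta -> Gamma -> R)
  (h1 : forall delta : Delta, countable [set gamma | f delta gamma != 0])
  (h2 : forall gamma : Gamma,
      [set delta | f delta gamma != 0] !=set0 /\
      countable [set delta | f delta gamma != 0]) :
  exists (D : Type) (G : D -> set Gamma) (E : D -> set Delta),
    (* (G d)_d is a partition of Gamma into countable sets *)
    (forall gamma : Gamma, exists d : D, G d gamma) /\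
    (forall d : D, countable (G d)) /\
    (* (E d)_d is a partition of Delta into countable sets *)
    (forall delta : Delta, exists d : D, E d delta) /\
    (forall d : D, countable (E d)) /\
    (forall d1 d2 : D, d1 <> d2 ->
       G d1 `&` G d2 = set0 /\ E d1 `&` E d2 = set0 /\
       (forall gamma delta,
          (G d1 gamma /\ E d2 delta) \/ (G d2 gamma /\ E d1 delta) ->
          f delta gamma = 0)).
Proof.
have h2' : forall gamma, countable [set delta | f delta gamma != 0] by move=> g; case: (h2 g).
pose comp (v : (Gamma + Delta)%type) := [set w | connf f v w].
pose D := {C : set (Gamma + Delta)%type | exists v, C = comp v}.
have compP (v : (Gamma + Delta)%type) : exists v', comp v = comp v' by exists v.
have ctC (C : D) : countable (sval C).
  case: C => C [v E] /=; rewrite E; exact: comp_countable.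
have shared (d1 d2 : D) w : sval d1 w -> sval d2 w -> d1 = d2.
  case: d1 => C1 [v1 E1]; case: d2 => C2 [v2 E2] /= H1 H2.
  have EC : C1 = C2.
    rewrite E1 E2 in H1 H2 *; apply/seteqP; split => x /= Hx.
    - apply: rt_trans H2 _; apply: rt_trans (connf_sym H1) Hx.
    - apply: rt_trans H1 _; apply: rt_trans (connf_sym H2) Hx.
  move: (ex_intro _ v2 E2) (ex_intro _ v1 E1); rewrite -EC => p2 p1.
  by rewrite (Prop_irrelevance p1 p2).
have closed (d : D) u w : sval d u -> adjf f u w -> sval d w.
  case: d => C [v E] /= Hu Ha; rewrite E in Hu *; apply: rt_trans Hu (rt_step _ _ _ _ Ha).
have preimage_ct (T : Type) (i : T -> (Gamma + Delta)%type) (C : set _) :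
    injective i -> countable C -> countable [set t | C (i t)].
  move=> ii /countable_injP[g gi]; apply/countable_injP; exists (g \o i).
  move=> x y; rewrite !inE => Hx Hy /= /gi; rewrite !inE => /(_ Hx Hy); exact: ii.
exists D, (fun C => [set g | sval C (inl g)]), (fun C => [set d | sval C (inr d)]).
split; first by move=> g; exists (exist _ (comp (inl g)) (compP _)); exact: rt_refl.
split; first by move=> C; apply: preimage_ct => // x y [].
split; first by move=> d; exists (exist _ (comp (inr d)) (compP _)); exact: rt_refl.
split; first by move=> C; apply: preimage_ct => // x y [].
move=> d1 d2 ne; split; last split.
- by apply/seteqP; split => // x [/= H1 H2]; apply: ne; exact: shared H1 H2.
- by apply/seteqP; split => // x [/= H1 H2]; apply: ne; exact: shared H1 H2.
- move=> g d [[/= Hg Hd]|[/= Hg Hd]]; apply/eqP; case: (eqVneq (f d g) 0) => // nz;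
    exfalso; apply: ne.
  + exact: (shared _ _ (inr d) (closed _ (inl g) (inr d) Hg nz) Hd).
  + exact: (shared _ _ (inr d) Hd (closed _ (inl g) (inr d) Hg nz)).
Qed.
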